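(* Let $X,Y$ be Banach spaces, $Z=X\times Y$, and let $P_X:(x,y)\mapsto x$, $P_Y:(x,y)\mapsto y$. Let $C=\begin{pmatrix}A&0\\0&B\end{pmatrix}$ be the generator of a $C_0$ bi-semigroup on $Z$, i.e. $A$ generates a $C_0$ semigroup $T(t)$ ($t\ge 0$) on $X$ and $-B$ generates a $C_0$ semigroup $t\mapsto S(-t)$ ($t\ge0$) on $Y$. Let $M$ be a Hausdorff topological space with a continuous semiflow $(t,\omega)\mapsto t\omega$. Let $L:M\to L(Z,Z)$ satisfy (D1): $(\omega,z)\mapsto L(\omega)z$ is continuous, $\tau(\omega):=\sup_{t\ge0}|L(t\omega)|<\infty$ for every $\omega$, and $\omega\mapsto\tau(\omega)$ is locally bounded. Let $f:M\times Z\to Z$ satisfy (D2): $f$ is continuous, $\varepsilon(\omega):=\sup_{t\ge0}\mathrm{Lip}\,f(t\omega)(\cdot)<\infty$ for every $\omega$, and $\omega\mapsto\varepsilon(\omega)$ is locally bounded. Assume $(\mathrm{UD}_+)$: there are a decomposition $Z=X_\omega\oplus Y_\omega$ with projections $P_\omega$, $P^c_\omega=I-P_\omega$ and operators $T_1$, $S_1$ satisfying the uniform dichotomy on $\mathbb{R}_+$ (see context) with constant $C_1$ and functions $\mu_s,\mu_u:M\to\mathbb{R}$, and such that for all $\omega\in M$, $t_1\le t_2$, $x_1\in X_{t_1\omega}$, $y_2\in Y_{t_2\omega}$, the function $z(t)=T_1(t-t_1,t_1\omega)x_1+S_1(t-t_2,t_2\omega)y_2$, $t\in[t_1,t_2]$,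 satisfies $P_Xz(t)=T(t-t_1)P_Xz(t_1)+\int_{t_1}^tT(t-s)P_XL(s\omega)z(s)\,ds$ and $P_Yz(t)=S(t-t_2)P_Yz(t_2)-\int_t^{t_2}S(t-s)P_YL(s\omega)z(s)\,ds$ for $t\in[t_1,t_2]$. Let $\{H(t,\omega)\}$ be the cocycle correspondence induced by the integral equation $x(t)=T_1(t-t_1,t_1\omega)x(t_1)+\int_{t_1}^tT_1(t-s,s\omega)P_{s\omega}f(s\omega)z(s)\,ds$, $y(t)=S_1(t-t_2,t_2\omega)y(t_2)-\int_t^{t_2}S_1(t-s,s\omega)P^c_{s\omega}f(s\omega)z(s)\,ds$ (see context). Put $\varepsilon'(\omega)=2C_1\varepsilon(\omega)$ and assume $\mu_u(\omega)-\mu_s(\omega)-2\varepsilon'(\omega)>0$. Take $\alpha,\beta,\lambda_u,\lambda_s$ with $\frac{\varepsilon'(\omega)}{\mu_u(\omega)-\mu_s(\omega)-\varepsilon'(\omega)}\le\alpha(\omega),\beta(\omega)<1$, $\lambda_u(\omega)=e^{-\mu_u(\omega)+\varepsilon'(\omega)}$, $\lambda_s(\omega)=e^{\mu_s(\omega)+\varepsilon'(\omega)}$. Then $H(t,s\omega)$ satisfies the (A)$(\alpha(\omega),\lambda_u^t(\omega))$ (B)$(\beta(\omega),\lambda_s^t(\omega))$ condition for all $t,s\ge0$ and $\omega\in M$. Moreover, if $\alpha(\omega),\beta(\omega)\in(\frac{\varepsilon'(\omega)}{\mu_u(\omega)-\mu_s(\omega)-\varepsilon'(\omega)},1)$ and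 $t\ge\epsilon_1>0$, then $H(t,s\omega)$ satisfies (A)$(\alpha(\omega);k_\alpha(\omega)\alpha(\omega),\lambda_u^t(\omega))$ (B)$(\beta(\omega);k_\beta(\omega)\beta(\omega),\lambda_s^t(\omega))$ for any $k_h(\omega)$ with $\frac{(\sigma(\omega)-\frac{\varepsilon'(\omega)}{h(\omega)})e^{-\sigma(\omega)\epsilon_1}+\frac{\varepsilon'(\omega)}{h(\omega)}}{\sigma(\omega)}\le k_h(\omega)<1$, $h=\alpha,\beta$, where $\sigma(\omega)=\mu_u(\omega)-\mu_s(\omega)-\varepsilon'(\omega)$. In particular, if there is a constant $c>1$ with $\inf_\omega\{\mu_u(\omega)-\mu_s(\omega)-(1+c)\varepsilon'(\omega)\}>0$, then $\alpha,\beta,k_\alpha,k_\beta$ can be taken to be constants less than $1$ and $\sup_\omega\lambda_s(\omega)\lambda_u(\omega)<1$; in fact $\sup_\omega\alpha(\omega),\sup_\omega\beta(\omega)$ can be chosen to tend to $0$ as $\sup_\omega\varepsilon'(\omega)\to0$.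
   Context: Uniform dichotomy on $\mathbb{R}_+$: (a) $Z=X_\omega\oplus Y_\omega$ for each $\omega\in M$, with projections $P_\omega$ onto $X_\omega$ along $Y_\omega$, $P^c_\omega=I-P_\omega$, and $(\omega,z)\mapsto P_\omega z$ continuous; (b) $T_1$ is a strongly continuous linear cocycle: $T_1(t,\omega)\in L(X_\omega,X_{t\omega})$, $T_1(0,\omega)=\mathrm{id}$, $T_1(t+s,\omega)=T_1(t,s\omega)T_1(s,\omega)$, $(t,\omega,z)\mapsto T_1(t,\omega)P_\omega z$ continuous; for $s\le t$, $T_1(t-s,s\omega):X_{s\omega}\to X_{t\omega}$. $S_1$ assigns to $t\ge0,\omega\in M$ an operator $S_1(-t,t\omega)\in L(Y_{t\omega},Y_\omega)$ (the second argument is notation indexed by $(t,\omega)$, since the semiflow need not be invertible; for $t\le s$, $S_1(t-s,s\omega)$ denotes $S_1(-(s-t),(s-t)(t\omega)):Y_{s\omega}\to Y_{t\omega}$), with $S_1(0,\omega)=\mathrm{id}$, $S_1(-(t+s),(t+s)\omega)=S_1(-s,s\omega)S_1(-t,t(s\omega))$, and $(t,\omega,z)\mapsto S_1(-t,t\omega)P^c_{t\omega}z$ continuous; (c) $\sup_\omega|P_\omega|\le C_1$, $\sup_\omega|P^c_\omega|\le C_1$; (d) $|T_1(t,r\omega)|\le e^{\mu_s(\omega)t}$ and $|S_1(-t,t(r\omega))|\le e^{-\mu_u(\omega)t}$ for all $t,r\ge0$, $\omega\in M$. Induced cocycle correspondence: for $s\ge0$, $\omega\in M$, $x_1\in X_\omega$,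 $y_2\in Y_{s\omega}$ the integral equation above (with $t_1=0,t_2=s$) has a unique continuous solution $z(t)=x(t)+y(t)$, $x(t)\in X_{t\omega}$, $y(t)\in Y_{t\omega}$, $t\in[0,s]$, with $x(0)=x_1$, $y(s)=y_2$; set $F_{s,\omega}(x_1,y_2)=x(s)$, $G_{s,\omega}(x_1,y_2)=y(0)$ and define the correspondence $H(s,\omega):X_\omega\oplus Y_\omega\to X_{s\omega}\oplus Y_{s\omega}$ by $(x_2,y_2)\in H(s,\omega)(x_1,y_1)$ iff $y_1=G_{s,\omega}(x_1,y_2)$ and $x_2=F_{s,\omega}(x_1,y_2)$. (A)(B) condition: a correspondence $H$ (a nonempty subset $\mathrm{Graph}H$ of $(X_1\times Y_1)\times(X_2\times Y_2)$, metric spaces with distances written $|u-v|$) satisfies (A)$(\alpha;\alpha',\lambda_u)$ (B)$(\beta;\beta',\lambda_s)$ if for all $(x_1,y_1)\times(x_2,y_2)$, $(x_1',y_1')\times(x_2',y_2')\in\mathrm{Graph}H$: (A1) $|x_1-x_1'|\le\alpha|y_1-y_1'|$ implies $|x_2-x_2'|\le\alpha'|y_2-y_2'|$; (A2) $|x_1-x_1'|\le\alpha|y_1-y_1'|$ implies $|y_1-y_1'|\le\lambda_u|y_2-y_2'|$; (B1) $|y_2-y_2'|\le\beta|x_2-x_2'|$ implies $|y_1-y_1'|\le\beta'|x_1-x_1'|$; (B2) $|y_2-y_2'|\le\beta|x_2-x_2'|$ implies $|x_2-x_2'|\le\lambda_s|x_1-x_1'|$. (A)$(\alpha,\lambda_u)$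 (B)$(\beta,\lambda_s)$ means $\alpha'=\alpha$, $\beta'=\beta$. Here the fibers carry the norm of $Z$. *)

(* Defs.v *)
From Stdlib Require Import Reals.
From Coquelicot Require Import Coquelicot.
Open Scope R_scope.

Record TopSpace := {
  tcar :> Type;
  topen : (tcar -> Prop) -> Prop;
  topen_full : topen (fun _ => True);
  topen_inter : forall U V, topen U -> topen V -> topen (fun x => U x /\ V x);
  topen_union : forall F : (tcar -> Prop) -> Prop,
      (forall U, F U -> topen U) -> topen (fun x => exists U, F U /\ U x)
}.
Arguments topen {t} _.

Definition Hausdorff (M : TopSpace) : Prop :=
  forall a b : M, a <> b -> exists U V, topen U /\ topen V /\ U a /\ V b /\
    forall x, ~ (U x /\ V x).

Definition semiflow (M : TopSpace) (phi : R -> M -> M) : Prop :=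
  (forall w, phi 0 w = w) /\
  (forall t s w, 0 <= t -> 0 <= s -> phi (t + s) w = phi t (phi s w)) /\
  (forall t0 w0, 0 <= t0 -> forall V, topen V -> V (phi t0 w0) ->
     exists d, 0 < d /\ exists U, topen U /\ U w0 /\
       forall t w, 0 <= t -> Rabs (t - t0) < d -> U w -> V (phi t w)).

Definition Zsp (X Y : CompleteNormedModule R_AbsRing) : NormedModule R_AbsRing :=
  prod_NormedModule R_AbsRing X Y.

Definition PX {X Y : CompleteNormedModule R_AbsRing} (z : Zsp X Y) : X := fst z.
Definition PY {X Y : CompleteNormedModule R_AbsRing} (z : Zsp X Y) : Y := snd z.

Definition cont_MZ {M : TopSpace} {U V : NormedModule R_AbsRing}
  (g : M -> U -> V) : Prop :=
  forall w0 z0 e, 0 < e -> exists O, topen O /\ O w0 /\ exists d, 0 < d /\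
    forall w z, O w -> norm (minus z z0) < d -> norm (minus (g w z) (g w0 z0)) < e.

Definition cont_RMZ {M : TopSpace} {U V : NormedModule R_AbsRing}
  (g : R -> M -> U -> V) : Prop :=
  forall t0 w0 z0 e, 0 <= t0 -> 0 < e -> exists O, topen O /\ O w0 /\
    exists d, 0 < d /\ forall t w z, 0 <= t -> Rabs (t - t0) < d -> O w ->
      norm (minus z z0) < d -> norm (minus (g t w z) (g t0 w0 z0)) < e.

Definition C0_semigroup {V : NormedModule R_AbsRing} (T : R -> V -> V) : Prop :=
  (forall x, T 0 x = x) /\
  (forall t s x, 0 <= t -> 0 <= s -> T (t + s) x = T t (T s x)) /\
  (forall t, 0 <= t -> is_linear (T t)) /\
  (forall x t0 e, 0 <= t0 -> 0 < e -> exists d, 0 < d /\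
     forall t, 0 <= t -> Rabs (t - t0) < d -> norm (minus (T t x) (T t0 x)) < e).

Definition D1 {M : TopSpace} {Z : NormedModule R_AbsRing}
  (phi : R -> M -> M) (L : M -> Z -> Z) : Prop :=
  (forall w, is_linear (L w)) /\ cont_MZ L /\
  (forall w0, exists O, topen O /\ O w0 /\ exists K,
     forall w t z, O w -> 0 <= t -> norm (L (phi t w) z) <= K * norm z).

(* eps0 = sup_{t>=0} Lip f(t w)(.)  (Lipschitz constants are >= 0) *)
Definition is_sup_Lip {M : TopSpace} {Z : NormedModule R_AbsRing}
  (phi : R -> M -> M) (f : M -> Z -> Z) (w : M) (eps0 : R) : Prop :=
  0 <= eps0 /\
  (forall t z z', 0 <= t ->
     norm (minus (f (phi t w) z) (f (phi t w) z')) <= eps0 * norm (minus z z')) /\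
  (forall e, 0 <= e ->
     (forall t z z', 0 <= t ->
        norm (minus (f (phi t w) z) (f (phi t w) z')) <= e * norm (minus z z')) ->
     eps0 <= e).

Definition D2 {M : TopSpace} {Z : NormedModule R_AbsRing}
  (phi : R -> M -> M) (f : M -> Z -> Z) (eps : M -> R) : Prop :=
  cont_MZ f /\ (forall w, is_sup_Lip phi f w (eps w)) /\
  (forall w0, exists O, topen O /\ O w0 /\ exists K, forall w, O w -> eps w <= K).

(* fibers: X_w = range P_w, Y_w = ker P_w *)
Definition inX {M : TopSpace} {Z : NormedModule R_AbsRing}
  (P : M -> Z -> Z) (w : M) (z : Z) : Prop := P w z = z.
Definition inY {M : TopSpace} {Z : NormedModule R_AbsRing}
  (P : M -> Z -> Z) (w : M) (z : Z) : Prop := P w z = zero.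
Definition Pc {M : TopSpace} {Z : NormedModule R_AbsRing}
  (P : M -> Z -> Z) (w : M) (z : Z) : Z := minus z (P w z).

(* Uniform dichotomy on R_+ (items (a)-(d)).
   T1 t w : X_w -> X_{t w}   is T_1(t, w);
   S1 t w : Y_{t w} -> Y_w   is S_1(-t, t w). *)
Definition uniform_dichotomy {M : TopSpace} {Z : NormedModule R_AbsRing}
  (phi : R -> M -> M) (P : M -> Z -> Z) (T1 S1 : R -> M -> Z -> Z)
  (C1 : R) (mu_s mu_u : M -> R) : Prop :=
  (forall w, is_linear (P w)) /\ (forall w z, P w (P w z) = P w z) /\ cont_MZ P /\
  (forall t w x, 0 <= t -> inX P w x -> inX P (phi t w) (T1 t w x)) /\
  (forall t w x y, 0 <= t -> inX P w x -> inX P w y ->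
      T1 t w (plus x y) = plus (T1 t w x) (T1 t w y)) /\
  (forall t w (k : R) x, 0 <= t -> inX P w x -> T1 t w (scal k x) = scal k (T1 t w x)) /\
  (forall w x, inX P w x -> T1 0 w x = x) /\
  (forall t s w x, 0 <= t -> 0 <= s -> inX P w x ->
      T1 (t + s) w x = T1 t (phi s w) (T1 s w x)) /\
  cont_RMZ (fun t w z => T1 t w (P w z)) /\
  (forall t w y, 0 <= t -> inY P (phi t w) y -> inY P w (S1 t w y)) /\
  (forall t w x y, 0 <= t -> inY P (phi t w) x -> inY P (phi t w) y ->
      S1 t w (plus x y) = plus (S1 t w x) (S1 t w y)) /\
  (forall t w (k : R) y, 0 <= t -> inY P (phi t w) y ->
      S1 t w (scal k y) = scal k (S1 t w y)) /\
  (forall w y, inY P w y -> S1 0 w y = y) /\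
  (forall t s w y, 0 <= t -> 0 <= s -> inY P (phi (t + s) w) y ->
      S1 (t + s) w y = S1 s w (S1 t (phi s w) y)) /\
  cont_RMZ (fun t w z => S1 t w (Pc P (phi t w) z)) /\
  (forall w z, norm (P w z) <= C1 * norm z /\ norm (Pc P w z) <= C1 * norm z) /\
  (forall t r w x, 0 <= t -> 0 <= r -> inX P (phi r w) x ->
      norm (T1 t (phi r w) x) <= exp (mu_s w * t) * norm x) /\
  (forall t r w y, 0 <= t -> 0 <= r -> inY P (phi t (phi r w)) y ->
      norm (S1 t (phi r w) y) <= exp (- mu_u w * t) * norm y).

Definition UD_compat {M : TopSpace} {X Y : CompleteNormedModule R_AbsRing}
  (phi : R -> M -> M) (T : R -> X -> X) (S : R -> Y -> Y) (L : M -> Zsp X Y -> Zsp X Y)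
  (P : M -> Zsp X Y -> Zsp X Y) (T1 S1 : R -> M -> Zsp X Y -> Zsp X Y) : Prop :=
  forall w t1 t2 x1 y2, 0 <= t1 -> t1 <= t2 ->
    inX P (phi t1 w) x1 -> inY P (phi t2 w) y2 ->
    let z := fun t => plus (T1 (t - t1) (phi t1 w) x1) (S1 (t2 - t) (phi t w) y2) in
    forall t, t1 <= t -> t <= t2 ->
      (exists I, is_RInt (fun s => T (t - s) (PX (L (phi s w) (z s)))) t1 t I /\
         PX (z t) = plus (T (t - t1) (PX (z t1))) I) /\
      (exists J, is_RInt (fun s => S (t - s) (PY (L (phi s w) (z s)))) t t2 J /\
         PY (z t) = minus (S (t - t2) (PY (z t2))) J).

(* z : [0,s] -> Z is a continuous solution of the nonlinear integral equation
   (t1 = 0, t2 = s), with x(t) = P_{t w} z(t), y(t) = P^c_{t w} z(t). *)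
Definition is_solution {M : TopSpace} {Z : NormedModule R_AbsRing}
  (phi : R -> M -> M) (P : M -> Z -> Z) (T1 S1 : R -> M -> Z -> Z)
  (f : M -> Z -> Z) (s : R) (w : M) (z : R -> Z) : Prop :=
  (forall t0 e, 0 <= t0 -> t0 <= s -> 0 < e -> exists d, 0 < d /\
     forall t, 0 <= t -> t <= s -> Rabs (t - t0) < d -> norm (minus (z t) (z t0)) < e) /\
  (forall t, 0 <= t -> t <= s ->
     (exists I, is_RInt (fun r => T1 (t - r) (phi r w) (P (phi r w) (f (phi r w) (z r))))
                  0 t I /\
        P (phi t w) (z t) = plus (T1 t w (P w (z 0))) I) /\
     (exists J, is_RInt (fun r => S1 (r - t) (phi t w) (Pc P (phi r w) (f (phi r w) (z r))))
                  t s J /\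
        Pc P (phi t w) (z t) = minus (S1 (s - t) (phi t w) (Pc P (phi s w) (z s))) J)).

(* graph of the induced cocycle correspondence H(s, w):
   (x2,y2) in H(s,w)(x1,y1) iff y1 = G_{s,w}(x1,y2), x2 = F_{s,w}(x1,y2). *)
Definition H_graph {M : TopSpace} {Z : NormedModule R_AbsRing}
  (phi : R -> M -> M) (P : M -> Z -> Z) (T1 S1 : R -> M -> Z -> Z)
  (f : M -> Z -> Z) (s : R) (w : M) (x1 y1 x2 y2 : Z) : Prop :=
  inX P w x1 /\ inY P (phi s w) y2 /\
  exists z, is_solution phi P T1 S1 f s w z /\
    P w (z 0) = x1 /\ Pc P (phi s w) (z s) = y2 /\
    y1 = Pc P w (z 0) /\ x2 = P (phi s w) (z s).

Definition AB_cond {Z : NormedModule R_AbsRing} (H : Z -> Z -> Z -> Z -> Prop)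
  (alpha alpha' lam_u beta beta' lam_s : R) : Prop :=
  forall x1 y1 x2 y2 x1' y1' x2' y2',
    H x1 y1 x2 y2 -> H x1' y1' x2' y2' ->
    (norm (minus x1 x1') <= alpha * norm (minus y1 y1') ->
       norm (minus x2 x2') <= alpha' * norm (minus y2 y2')) /\
    (norm (minus x1 x1') <= alpha * norm (minus y1 y1') ->
       norm (minus y1 y1') <= lam_u * norm (minus y2 y2')) /\
    (norm (minus y2 y2') <= beta * norm (minus x2 x2') ->
       norm (minus y1 y1') <= beta' * norm (minus x1 x1')) /\
    (norm (minus y2 y2') <= beta * norm (minus x2 x2') ->
       norm (minus x2 x2') <= lam_s * norm (minus x1 x1')).

(* Main.v *)
Require Import Defs.
From Stdlib Require Import Reals Lra Psatz.
From Coquelicot Require Import Coquelicot.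
Open Scope R_scope.

Lemma decr_of_deriv (H dH : R -> R) a b : a <= b ->
  (forall x, is_derive H x (dH x)) -> (forall x, a <= x <= b -> dH x <= 0) -> H b <= H a.
Proof.
  intros hab hd hn.
  destruct (MVT_gen H a b dH) as [c [hc e]].
  - intros x _; apply hd.
  - intros x _. apply continuity_pt_filterlim. apply (ex_derive_continuous H x).
    eexists; apply hd.
  - rewrite Rmin_left in hc by lra. rewrite Rmax_right in hc by lra.
    assert (dH c * (b - a) <= 0).
    { assert (dH c <= 0) by (apply hn; lra).
      assert (0 <= b - a) by lra. nra. }
    lra.
Qed.

Lemma incr_of_deriv (H dH : R -> R) a b : a <= b ->
  (forall x, is_derive H x (dH x)) -> (forall x, a <= x <= b -> 0 <= dH x) -> H a <= H b.
Proof.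
  intros hab hd hn.
  assert (- H b <= - H a); [|lra].
  apply (decr_of_deriv (fun x => - H x) (fun x => - dH x) a b hab).
  - intros x. apply (is_derive_opp H x (dH x)), hd.
  - intros x hx. specialize (hn x hx). lra.
Qed.


Lemma exp_le x y : x <= y -> exp x <= exp y.
Proof. intros [h|h]; [left; apply exp_increasing; auto| subst; lra]. Qed.

Section Cone.
Variables (m n d t : R) (A B : R -> R).
Hypothesis hd : 0 <= d.
Hypothesis hsig : 0 < n - m - 2 * d.
Hypothesis ht : 0 <= t.
Hypothesis hA : forall x, is_derive A x ((m + d) * A x + d * B x).
Hypothesis hB : forall x, is_derive B x ((n - d) * B x - d * A x).
Hypothesis hA0 : forall r, 0 <= r <= t -> 0 <= A r.
Hypothesis hB0 : forall r, 0 <= r <= t -> 0 <= B r.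

Let sg := n - m - 2 * d.
Let c := 2 * d / sg.

Lemma c_ge0 : 0 <= c.
Proof. unfold c, sg. apply Rmult_le_pos; [lra|]. left; apply Rinv_0_lt_compat; lra. Qed.

Lemma c_sg : c * sg = 2 * d.
Proof. unfold c, sg. field. lra. Qed.

Lemma coneF (al : R) : c <= al <= 1 -> A 0 <= al * B 0 ->
  A t <= (c + (al - c) * exp (- sg * t)) * B t /\ B 0 <= exp (- (n - 2 * d) * t) * B t.
Proof.
  intros hal h0.
  set (phi := fun r => c + (al - c) * exp (- sg * r)).
  set (K := fun r => (m + d + d * c) * r - d * (al - c) * exp (- sg * r) / sg).
  set (H := fun r => (A r - phi r * B r) * exp (- K r)).
  assert (hsg : 0 < sg) by (unfold sg; lra).
  assert (hcs := c_sg). assert (hc0 := c_ge0).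
  assert (hphi : forall r, 0 <= r -> c <= phi r <= al).
  { intros r hr. unfold phi. assert (0 < exp (- sg * r)) by apply exp_pos.
    assert (exp (- sg * r) <= 1). { rewrite <- exp_0. apply exp_le. nra. }
    nra. }
  assert (hH : forall x, is_derive H x (d * (phi x ^ 2 - 1) * B x * exp (- K x))).
  { intros x. unfold H, phi, K.
    auto_derive.
    - repeat split; eexists; [apply hA|apply hB].
    - replace (Derive (fun x => A x) x) with ((m + d) * A x + d * B x)
        by (symmetry; apply is_derive_unique; apply hA).
      replace (Derive (fun x => B x) x) with ((n - d) * B x - d * A x)
        by (symmetry; apply is_derive_unique; apply hB).
      unfold Rminus, Rdiv. set (e := exp (- sg * x)). set (E := exp _).
      clearbody E e. change (@eq R ?l ?r) with (@eq R l r). unfold c, sg in *. field. lra. }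
  assert (hle : forall r, 0 <= r <= t -> A r <= phi r * B r).
  { intros r hr.
    assert (H r <= H 0).
    { apply (decr_of_deriv H (fun x => d * (phi x ^ 2 - 1) * B x * exp (- K x)) 0 r); [lra|exact hH|].
      intros x hx. assert (hp := hphi x (proj1 hx)).
      assert (0 <= B x) by (apply hB0; lra).
      assert (0 < exp (- K x)) by apply exp_pos.
      assert (phi x ^ 2 - 1 <= 0) by nra.
      assert (0 <= B x * exp (- K x)) by nra.
      assert (d * (phi x ^ 2 - 1) <= 0) by nra. nra. }
    assert (H 0 <= 0).
    { unfold H. replace (phi 0) with al.
      - assert (0 < exp (- K 0)) by apply exp_pos. nra.
      - unfold phi. rewrite Rmult_0_r, exp_0. ring. }
    unfold H in *. assert (0 < exp (- K r)) by apply exp_pos. nra. }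
  split.
  - apply hle; lra.
  - set (G := fun r => B r * exp (- (n - 2 * d) * r)).
    assert (hG : forall x, is_derive G x (d * (B x - A x) * exp (- (n - 2 * d) * x))).
    { intros x. unfold G. auto_derive.
      - eexists; apply hB.
      - replace (Derive (fun x => B x) x) with ((n - d) * B x - d * A x)
          by (symmetry; apply is_derive_unique; apply hB). ring. }
    assert (G 0 <= G t).
    { apply (incr_of_deriv G (fun x => d * (B x - A x) * exp (- (n - 2 * d) * x)) 0 t ht hG). intros x hx.
      assert (hp := hphi x (proj1 hx)). assert (h1 := hle x hx).
      assert (0 <= B x) by (apply hB0; lra).
      assert (A x <= B x) by nra.
      assert (0 < exp (- (n - 2 * d) * x)) by apply exp_pos.
      assert (0 <= d * (B x - A x)) by nra. nra. }
    unfold G in H0. rewrite Rmult_0_r, exp_0, Rmult_1_r in H0.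
    replace (exp (- (n - 2 * d) * t) * B t) with (B t * exp (- (n - 2 * d) * t)) by ring.
    exact H0.
Qed.

Lemma coneB (be : R) : c <= be <= 1 -> B t <= be * A t ->
  B 0 <= (c + (be - c) * exp (- sg * t)) * A 0 /\ A t <= exp ((m + 2 * d) * t) * A 0.
Proof.
  intros hbe h0.
  set (psi := fun r => c + (be - c) * exp (- sg * (t - r))).
  set (K := fun r => (n - d - d * c) * r - d * (be - c) * exp (- sg * (t - r)) / sg).
  set (H := fun r => (B r - psi r * A r) * exp (- K r)).
  assert (hsg : 0 < sg) by (unfold sg; lra).
  assert (hcs := c_sg). assert (hc0 := c_ge0).
  assert (hpsi : forall r, r <= t -> c <= psi r <= be).
  { intros r hr. unfold psi. assert (0 < exp (- sg * (t - r))) by apply exp_pos.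
    assert (exp (- sg * (t - r)) <= 1). { rewrite <- exp_0. apply exp_le. nra. }
    nra. }
  assert (hH : forall x, is_derive H x (d * (1 - psi x ^ 2) * A x * exp (- K x))).
  { intros x. unfold H, psi, K.
    auto_derive.
    - repeat split; eexists; [apply hB|apply hA].
    - replace (Derive (fun x => A x) x) with ((m + d) * A x + d * B x)
        by (symmetry; apply is_derive_unique; apply hA).
      replace (Derive (fun x => B x) x) with ((n - d) * B x - d * A x)
        by (symmetry; apply is_derive_unique; apply hB).
      unfold Rminus, Rdiv. set (e := exp (- sg * (t + - x))). set (E := exp _).
      clearbody E e. unfold c, sg in *. field. lra. }
  assert (hle : forall r, 0 <= r <= t -> B r <= psi r * A r).
  { intros r hr.
    assert (H r <= H t).
    { apply (incr_of_deriv H (fun x => d * (1 - psi x ^ 2) * A x * exp (- K x)) r t);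
        [lra|exact hH|].
      intros x hx. assert (hp := hpsi x (proj2 hx)).
      assert (0 <= A x) by (apply hA0; lra).
      assert (0 < exp (- K x)) by apply exp_pos.
      assert (0 <= 1 - psi x ^ 2) by nra.
      assert (0 <= A x * exp (- K x)) by nra.
      assert (0 <= d * (1 - psi x ^ 2)) by nra. nra. }
    assert (H t <= 0).
    { unfold H. replace (psi t) with be.
      - assert (0 < exp (- K t)) by apply exp_pos. nra.
      - unfold psi. replace (- sg * (t - t)) with 0 by ring. rewrite exp_0. ring. }
    unfold H in *. assert (0 < exp (- K r)) by apply exp_pos. nra. }
  split.
  - replace (c + (be - c) * exp (- sg * t)) with (psi 0) by (unfold psi; f_equal; f_equal; f_equal; ring).
    apply hle; lra.
  - set (G := fun r => A r * exp (- (m + 2 * d) * r)).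
    assert (hG : forall x, is_derive G x (d * (B x - A x) * exp (- (m + 2 * d) * x))).
    { intros x. unfold G. auto_derive.
      - eexists; apply hA.
      - replace (Derive (fun x => A x) x) with ((m + d) * A x + d * B x)
          by (symmetry; apply is_derive_unique; apply hA). ring. }
    assert (G t <= G 0).
    { apply (decr_of_deriv G (fun x => d * (B x - A x) * exp (- (m + 2 * d) * x)) 0 t ht hG).
      intros x hx.
      assert (hp := hpsi x (proj2 hx)). assert (h1 := hle x hx).
      assert (0 <= A x) by (apply hA0; lra).
      assert (B x <= A x) by nra.
      assert (0 < exp (- (m + 2 * d) * x)) by apply exp_pos.
      assert (d * (B x - A x) <= 0) by nra. nra. }
    unfold G in H0. rewrite Rmult_0_r, exp_0, Rmult_1_r in H0.
    assert (he : exp ((m + 2 * d) * t) * exp (- (m + 2 * d) * t) = 1).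
    { rewrite <- exp_plus. replace ((m + 2 * d) * t + - (m + 2 * d) * t) with 0 by ring.
      apply exp_0. }
    assert (0 < exp ((m + 2 * d) * t)) by apply exp_pos.
    assert (A t = exp ((m + 2 * d) * t) * (A t * exp (- (m + 2 * d) * t))).
    { transitivity (A t * (exp ((m + 2 * d) * t) * exp (- (m + 2 * d) * t))).
      - rewrite he; ring.
      - ring. }
    rewrite H2. apply Rmult_le_compat_l; lra.
Qed.
End Cone.


Lemma bvp (m n d t a0 bt : R) : 0 <= d -> 4 * d < n - m -> 0 <= t ->
  exists A B : R -> R,
    (forall x, is_derive A x ((m + d) * A x + d * B x)) /\
    (forall x, is_derive B x ((n - d) * B x - d * A x)) /\
    A 0 = a0 /\ B t = bt.
Proof.
  intros hd hg ht.
  set (g := n - m - 2 * d).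
  set (D := g * g - 4 * d * d).
  assert (hD : 0 <= D) by (unfold D, g; nra).
  set (s := sqrt D).
  assert (hs : s * s = D) by (apply sqrt_sqrt; exact hD).
  assert (hs0 : 0 <= s) by apply sqrt_pos.
  set (q := (g + s) / 2).
  assert (hq : q * q - g * q + d * d = 0) by (unfold q; unfold D in hs; nra).
  assert (hqd : d < q) by (unfold q, g; lra).
  set (l1 := n - d - q). set (l2 := m + d + q).
  assert (hl : l1 <= l2) by (unfold l1, l2, q, g; lra).
  set (e1 := exp (l1 * t)). set (e2 := exp (l2 * t)).
  assert (he1 : 0 < e1) by apply exp_pos.
  assert (he12 : e1 <= e2) by (apply exp_le; nra).
  set (det := q * q * e2 - d * d * e1).
  assert (hdet : 0 < det).
  { unfold det. assert (d * d < q * q) by nra. nra. }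
  set (c1 := (a0 * q * e2 - d * bt) / det).
  set (c2 := (q * bt - d * e1 * a0) / det).
  exists (fun x => c1 * q * exp (l1 * x) + c2 * d * exp (l2 * x)).
  exists (fun x => c1 * d * exp (l1 * x) + c2 * q * exp (l2 * x)).
  assert (k1 : q * l1 = (m + d) * q + d * d) by (unfold l1, g in *; nra).
  assert (k2 : q * l2 = (n - d) * q - d * d) by (unfold l2, g in *; nra).
  split; [|split; [|split]].
  - intros x. auto_derive; auto.
    set (E1 := exp (l1 * x)). set (E2 := exp (l2 * x)).
    assert (c1 * E1 * (q * l1) = c1 * E1 * ((m + d) * q + d * d)) by (rewrite k1; ring).
    change (@eq R ?l ?r) with (@eq R l r). unfold l2 in *. lra.
  - intros x. auto_derive; auto.
    set (E1 := exp (l1 * x)). set (E2 := exp (l2 * x)).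
    assert (c2 * E2 * (q * l2) = c2 * E2 * ((n - d) * q - d * d)) by (rewrite k2; ring).
    unfold l1, l2 in *. lra.
  - rewrite !Rmult_0_r, exp_0. unfold c1, c2, det. field. intro; unfold det in hdet; lra.
  - fold e1 e2. unfold c1, c2, det. field. intro; unfold det in hdet; lra.
Qed.


Lemma ode_intA (m n d : R) (A B : R -> R) :
  (forall x, is_derive A x ((m + d) * A x + d * B x)) ->
  (forall x, is_derive B x ((n - d) * B x - d * A x)) ->
  forall r, is_RInt (fun u => exp (m * (r - u)) * (d * (A u + B u))) 0 r
              (A r - exp (m * r) * A 0).
Proof.
  intros hA hB r.
  assert (h := is_RInt_derive (fun u => exp (m * (r - u)) * A u)
                 (fun u => exp (m * (r - u)) * (d * (A u + B u))) 0 r).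
  replace (A r - exp (m * r) * A 0) with
    (minus (exp (m * (r - r)) * A r) (exp (m * (r - 0)) * A 0)).
  - apply h.
    + intros x _. auto_derive.
      * eexists; apply hA.
      * replace (Derive (fun x => A x) x) with ((m + d) * A x + d * B x)
          by (symmetry; apply is_derive_unique; apply hA). unfold Rminus. ring.
    + intros x _. apply (@ex_derive_continuous R_AbsRing R_NormedModule). auto_derive.
      repeat split; eexists; [apply hA|apply hB].
  - unfold minus, plus, opp; simpl.
    replace (r - r) with 0 by ring. replace (r - 0) with r by ring.
    rewrite Rmult_0_r, exp_0. ring.
Qed.

Lemma ode_intB (m n d t : R) (A B : R -> R) :
  (forall x, is_derive A x ((m + d) * A x + d * B x)) ->
  (forall x, is_derive B x ((n - d) * B x - d * A x)) ->
  forall r, is_RInt (fun u => exp (- n * (u - r)) * (d * (A u + B u))) r t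
              (B r - exp (- n * (t - r)) * B t).
Proof.
  intros hA hB r.
  assert (h := is_RInt_derive (fun u => - (exp (- n * (u - r)) * B u))
                 (fun u => exp (- n * (u - r)) * (d * (A u + B u))) r t).
  replace (B r - exp (- n * (t - r)) * B t) with
    (minus (- (exp (- n * (t - r)) * B t)) (- (exp (- n * (r - r)) * B r))).
  - apply h.
    + intros x _. auto_derive.
      * eexists; apply hB.
      * replace (Derive (fun x => B x) x) with ((n - d) * B x - d * A x)
          by (symmetry; apply is_derive_unique; apply hB). unfold Rminus. ring.
    + intros x _. apply (@ex_derive_continuous R_AbsRing R_NormedModule). auto_derive.
      repeat split; eexists; [apply hA|apply hB].
  - unfold minus, plus, opp; simpl.
    replace (r - r) with 0 by ring.
    rewrite Rmult_0_r, exp_0. ring.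
Qed.

Lemma intE1 (m l C r : R) : l <> m ->
  is_RInt (fun u => exp (m * (r - u)) * (C * exp (l * u))) 0 r
    (C * (exp (l * r) - exp (m * r)) / (l - m)).
Proof.
  intros hl.
  assert (h := is_RInt_derive (fun u => C * (exp (m * (r - u)) * exp (l * u)) / (l - m))
                 (fun u => exp (m * (r - u)) * (C * exp (l * u))) 0 r).
  replace (C * (exp (l * r) - exp (m * r)) / (l - m)) with
    (minus (C * (exp (m * (r - r)) * exp (l * r)) / (l - m))
           (C * (exp (m * (r - 0)) * exp (l * 0)) / (l - m))).
  - apply h.
    + intros x _. auto_derive; auto. unfold Rminus. field. lra.
    + intros x _. apply (@ex_derive_continuous R_AbsRing R_NormedModule). auto_derive. auto.
  - unfold minus, plus, opp; simpl.
    replace (r - r) with 0 by ring. replace (r - 0) with r by ring.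
    rewrite !Rmult_0_r, exp_0. field. lra.
Qed.

Lemma intE2 (n l C r t : R) : l <> n ->
  is_RInt (fun u => exp (- n * (u - r)) * (C * exp (l * u))) r t
    (C * (exp (l * r) - exp (- n * (t - r)) * exp (l * t)) / (n - l)).
Proof.
  intros hl.
  assert (h := is_RInt_derive (fun u => - (C * (exp (- n * (u - r)) * exp (l * u)) / (n - l)))
                 (fun u => exp (- n * (u - r)) * (C * exp (l * u))) r t).
  replace (C * (exp (l * r) - exp (- n * (t - r)) * exp (l * t)) / (n - l)) with
    (minus (- (C * (exp (- n * (t - r)) * exp (l * t)) / (n - l)))
           (- (C * (exp (- n * (r - r)) * exp (l * r)) / (n - l)))).
  - apply h.
    + intros x _. auto_derive; auto. unfold Rminus. field. lra.
    + intros x _. apply (@ex_derive_continuous R_AbsRing R_NormedModule). auto_derive. auto.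
  - unfold minus, plus, opp; simpl.
    replace (r - r) with 0 by ring.
    rewrite !Rmult_0_r, exp_0. field. lra.
Qed.


Lemma Rmax_le_l x y : x <= y -> 0 <= y -> Rmax x 0 <= y.
Proof. intros; unfold Rmax; destruct Rle_dec; lra. Qed.

Lemma compare (m n d t : R) (a b N A B : R -> R) :
  0 <= d -> 4 * d < n - m -> 0 <= t ->
  (forall r, 0 <= r <= t -> N r <= a r + b r) ->
  (forall r, 0 <= r <= t -> exists I, is_RInt (fun u => exp (m * (r - u)) * (d * N u)) 0 r I
                            /\ a r <= exp (m * r) * a 0 + I) ->
  (forall r, 0 <= r <= t -> exists J, is_RInt (fun u => exp (- n * (u - r)) * (d * N u)) r t J
                            /\ b r <= exp (- n * (t - r)) * b t + J) ->
  (forall r, is_RInt (fun u => exp (m * (r - u)) * (d * (A u + B u))) 0 r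
              (A r - exp (m * r) * a 0)) ->
  (forall r, is_RInt (fun u => exp (- n * (u - r)) * (d * (A u + B u))) r t
              (B r - exp (- n * (t - r)) * b t)) ->
  (exists K, forall r, 0 <= r <= t -> a r <= K /\ b r <= K /\ - K <= A r /\ - K <= B r) ->
  forall r, 0 <= r <= t -> a r <= A r /\ b r <= B r.
Proof.
  intros hd hg ht hN ha hb hA hB [K hK].
  set (l := (m + n) / 2). set (th := 4 * d / (n - m)).
  assert (hth0 : 0 <= th) by (unfold th; apply Rmult_le_pos; [lra|left; apply Rinv_0_lt_compat; lra]).
  assert (hth1 : th < 1).
  { unfold th. apply (Rmult_lt_reg_r (n - m)); [lra|]. field_simplify; lra. }
  assert (hlm : d / (l - m) = th / 2) by (unfold l, th; field; lra).
  assert (hnl : d / (n - l) = th / 2) by (unfold l, th; field; lra).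
  set (Km := Rmax K 0).
  assert (hKm : 0 <= Km) by apply Rmax_r.
  assert (hKK : K <= Km) by apply Rmax_l.
  set (S0 := 4 * Km * (exp (- l * t) + 1)).
  assert (hS0 : 0 <= S0) by (unfold S0; assert (0 < exp (- l * t)) by apply exp_pos; nra).
  set (P := fun r => Rmax (a r - A r) 0 + Rmax (b r - B r) 0).
  assert (claim : forall k r, 0 <= r <= t -> P r <= th ^ k * S0 * exp (l * r)).
  { induction k as [|k IH]; intros r hr.
    - simpl. destruct (hK r hr) as (h1 & h2 & h3 & h4).
      assert (P r <= 4 * Km).
      { unfold P. assert (Rmax (a r - A r) 0 <= 2 * Km) by (apply Rmax_le_l; lra).
        assert (Rmax (b r - B r) 0 <= 2 * Km) by (apply Rmax_le_l; lra). lra. }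
      assert (1 <= (exp (- l * t) + 1) * exp (l * r)).
      { rewrite Rmult_plus_distr_r, <- exp_plus.
        assert (0 < exp (- l * t + l * r)) by apply exp_pos.
        assert (0 < exp (l * r)) by apply exp_pos.
        destruct (Rle_lt_dec 0 l).
        - assert (1 <= exp (l * r)) by (rewrite <- exp_0; apply exp_le; nra). nra.
        - assert (1 <= exp (- l * t + l * r)) by (rewrite <- exp_0; apply exp_le; nra). nra. }
      unfold S0. nra.
    - set (C := th ^ k * S0).
      assert (hC : 0 <= C) by (unfold C; apply Rmult_le_pos; [apply pow_le; lra|lra]).
      assert (hel : 0 < exp (l * r)) by apply exp_pos.
      assert (hbnd : forall u, 0 <= u <= t -> N u - A u - B u <= C * exp (l * u)).
      { intros u hu. specialize (IH u hu). specialize (hN u hu). unfold P in IH.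
        assert (a u - A u <= Rmax (a u - A u) 0) by apply Rmax_l.
        assert (b u - B u <= Rmax (b u - B u) 0) by apply Rmax_l. unfold C. lra. }
      assert (ha' : a r - A r <= th / 2 * C * exp (l * r)).
      { destruct (ha r hr) as [I [hI hle]].
        assert (hm := is_RInt_minus _ _ _ _ _ _ hI (hA r)).
        assert (he := intE1 m l (d * C) r ltac:(unfold l; lra)).
        assert (hc := is_RInt_le _ _ _ _ _ _ (proj1 hr) hm he).
        assert (minus I (A r - exp (m * r) * a 0) <=
                d * C * (exp (l * r) - exp (m * r)) / (l - m)).
        { apply hc. intros x hx. unfold minus, plus, opp; simpl.
          assert (hx' := hbnd x ltac:(lra)).
          assert (0 < exp (m * (r - x))) by apply exp_pos.
          assert (0 <= d * (C * exp (l * x) - (N x - A x - B x))) by (apply Rmult_le_pos; lra).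
          nra. }
        unfold minus, plus, opp in H; simpl in H.
        assert (0 < exp (m * r)) by apply exp_pos.
        assert (d * C * (exp (l * r) - exp (m * r)) / (l - m) <= th / 2 * C * exp (l * r)).
        { rewrite <- hlm. unfold Rdiv. 
          assert (0 < / (l - m)) by (apply Rinv_0_lt_compat; unfold l; lra).
          assert (0 <= d * C * / (l - m)) by (apply Rmult_le_pos; [apply Rmult_le_pos|]; lra).
          assert (d * C * / (l - m) * exp (m * r) >= 0) by (apply Rle_ge, Rmult_le_pos; lra).
          replace (d * C * (exp (l * r) - exp (m * r)) * / (l - m)) with
            (d * C * / (l - m) * exp (l * r) - d * C * / (l - m) * exp (m * r)) by ring.
          replace (d * / (l - m) * C * exp (l * r)) with (d * C * / (l - m) * exp (l * r)) by ring.
          lra. }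
        lra. }
      assert (hb' : b r - B r <= th / 2 * C * exp (l * r)).
      { destruct (hb r hr) as [J [hJ hle]].
        assert (hm := is_RInt_minus _ _ _ _ _ _ hJ (hB r)).
        assert (he := intE2 n l (d * C) r t ltac:(unfold l; lra)).
        assert (hc := is_RInt_le _ _ _ _ _ _ (proj2 hr) hm he).
        assert (minus J (B r - exp (- n * (t - r)) * b t) <=
                d * C * (exp (l * r) - exp (- n * (t - r)) * exp (l * t)) / (n - l)).
        { apply hc. intros x hx. unfold minus, plus, opp; simpl.
          assert (hx' := hbnd x ltac:(lra)).
          assert (0 < exp (- n * (x - r))) by apply exp_pos.
          assert (0 <= d * (C * exp (l * x) - (N x - A x - B x))) by (apply Rmult_le_pos; lra).
          nra. }
        unfold minus, plus, opp in H; simpl in H.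
        assert (0 < exp (- n * (t - r)) * exp (l * t))
          by (apply Rmult_lt_0_compat; apply exp_pos).
        assert (d * C * (exp (l * r) - exp (- n * (t - r)) * exp (l * t)) / (n - l)
                <= th / 2 * C * exp (l * r)).
        { rewrite <- hnl. unfold Rdiv.
          assert (0 < / (n - l)) by (apply Rinv_0_lt_compat; unfold l; lra).
          assert (0 <= d * C * / (n - l)) by (apply Rmult_le_pos; [apply Rmult_le_pos|]; lra).
          set (Q := exp (- n * (t - r)) * exp (l * t)) in *.
          assert (d * C * / (n - l) * Q >= 0) by (apply Rle_ge, Rmult_le_pos; lra).
          replace (d * C * (exp (l * r) - Q) * / (n - l)) with
            (d * C * / (n - l) * exp (l * r) - d * C * / (n - l) * Q) by ring.
          replace (d * / (n - l) * C * exp (l * r)) with (d * C * / (n - l) * exp (l * r)) by ring.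
          lra. }
        lra. }
      unfold P. simpl. fold C.
      assert (0 <= th / 2 * C * exp (l * r)) by (apply Rmult_le_pos; nra).
      assert (Rmax (a r - A r) 0 <= th / 2 * C * exp (l * r)) by (apply Rmax_le_l; lra).
      assert (Rmax (b r - B r) 0 <= th / 2 * C * exp (l * r)) by (apply Rmax_le_l; lra).
      unfold C in *. lra. }
  intros r hr.
  assert (hP : P r <= 0).
  { destruct (Rle_lt_dec (P r) 0) as [h|h]; [exact h|exfalso].
    set (X := S0 * exp (l * r)).
    assert (hX : 0 <= X) by (unfold X; assert (0 < exp (l * r)) by apply exp_pos; nra).
    destruct (pow_lt_1_zero th ltac:(rewrite Rabs_right; lra) (P r / (X + 1)))
      as [k hk].
    { apply Rdiv_lt_0_compat; lra. }
    specialize (hk k (le_n k)). rewrite Rabs_right in hk by (apply Rle_ge, pow_le; lra).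
    specialize (claim k r hr).
    assert (th ^ k * X <= P r / (X + 1) * X) by (apply Rmult_le_compat_r; lra).
    assert (P r / (X + 1) * X < P r).
    { apply (Rmult_lt_reg_r (X + 1)); [lra|]. field_simplify; nra. }
    unfold X in *. nra. }
  unfold P in hP.
  assert (a r - A r <= Rmax (a r - A r) 0) by apply Rmax_l.
  assert (b r - B r <= Rmax (b r - B r) 0) by apply Rmax_l.
  assert (0 <= Rmax (a r - A r) 0) by apply Rmax_r.
  assert (0 <= Rmax (b r - B r) 0) by apply Rmax_r.
  lra.
Qed.


Lemma ag_swap {G : AbelianGroup} (a b c d : G) :
  plus (plus a b) (plus c d) = plus (plus a c) (plus b d).
Proof.
  rewrite <- !plus_assoc. f_equal. rewrite !plus_assoc. f_equal. apply plus_comm.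
Qed.

Lemma ag3 {G : AbelianGroup} (a b c d : G) :
  minus (plus a b) (plus c d) = plus (minus a c) (minus b d).
Proof. unfold minus. rewrite opp_plus. apply ag_swap. Qed.

Lemma ag2 {G : AbelianGroup} (a b c d : G) :
  minus (minus a b) (minus c d) = minus (minus a c) (minus b d).
Proof. unfold minus. rewrite (opp_plus c), (opp_plus b). apply ag_swap. Qed.

Lemma ag1 {G : AbelianGroup} (p p' z z' : G) :
  plus (minus p p') (minus (minus z p) (minus z' p')) = minus z z'.
Proof.
  rewrite (ag2 z p z' p'). generalize (minus p p') (minus z z'). intros u v.
  unfold minus. rewrite (plus_comm v (opp u)). rewrite plus_assoc.
  transitivity (plus (@zero G) v); [f_equal; apply plus_opp_r | apply plus_zero_l].
Qed.

Lemma norm_minus_le {K : AbsRing} {V : NormedModule K} (a b : V) :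
  norm (minus a b) <= norm a + norm b.
Proof. unfold minus. rewrite <- (norm_opp b). apply norm_triangle. Qed.

Lemma clamp_lip (t x y : R) : 0 <= t ->
  Rabs (Rmax 0 (Rmin t y) - Rmax 0 (Rmin t x)) <= Rabs (y - x).
Proof.
  intros ht. unfold Rmax, Rmin. repeat destruct Rle_dec; unfold Rabs;
  repeat destruct Rcase_abs; lra.
Qed.

Lemma clamp_in (t x : R) : 0 <= t -> 0 <= Rmax 0 (Rmin t x) <= t.
Proof. intros ht. unfold Rmax, Rmin. repeat destruct Rle_dec; lra. Qed.

Lemma clamp_id (t x : R) : 0 <= x <= t -> Rmax 0 (Rmin t x) = x.
Proof. intros h. unfold Rmax, Rmin. repeat destruct Rle_dec; lra. Qed.

Definition zcont {Z : NormedModule R_AbsRing} (s : R) (z : R -> Z) : Prop :=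
  forall t0 e, 0 <= t0 -> t0 <= s -> 0 < e -> exists d, 0 < d /\
     forall t, 0 <= t -> t <= s -> Rabs (t - t0) < d -> norm (minus (z t) (z t0)) < e.

Lemma Ncont {Z : NormedModule R_AbsRing} (t : R) (z z' : R -> Z) : 0 <= t ->
  zcont t z -> zcont t z' ->
  forall x, continuity_pt (fun u => norm (minus (z (Rmax 0 (Rmin t u))) (z' (Rmax 0 (Rmin t u))))) x.
Proof.
  intros ht hz hz' x.
  unfold continuity_pt, continue_in, limit1_in, limit_in; simpl; unfold R_dist.
  intros e he.
  set (cx := Rmax 0 (Rmin t x)). assert (hcx := clamp_in t x ht).
  destruct (hz cx (e / 2) (proj1 hcx) (proj2 hcx) ltac:(lra)) as [d1 [hd1 h1]].
  destruct (hz' cx (e / 2) (proj1 hcx) (proj2 hcx) ltac:(lra)) as [d2 [hd2 h2]].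
  exists (Rmin d1 d2). split; [apply Rmin_pos; lra|].
  intros y [_ hy].
  set (cy := Rmax 0 (Rmin t y)). assert (hcy := clamp_in t y ht).
  assert (hl := clamp_lip t x y ht). fold cx cy in hl.
  assert (Rmin d1 d2 <= d1) by apply Rmin_l. assert (Rmin d1 d2 <= d2) by apply Rmin_r.
  specialize (h1 cy (proj1 hcy) (proj2 hcy) ltac:(lra)).
  specialize (h2 cy (proj1 hcy) (proj2 hcy) ltac:(lra)).
  eapply Rle_lt_trans; [apply norm_triangle_inv|].
  rewrite ag2. eapply Rle_lt_trans; [apply norm_minus_le|]. lra.
Qed.


Section Fib.
Context {Z : NormedModule R_AbsRing} {M : TopSpace} (P : M -> Z -> Z) (T1 S1 : R -> M -> Z -> Z)
  (phi : R -> M -> M).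
Hypothesis Plin : forall w, is_linear (P w).
Hypothesis Pidem : forall w z, P w (P w z) = P w z.
Hypothesis T1plus : forall t w x y, 0 <= t -> inX P w x -> inX P w y ->
      T1 t w (plus x y) = plus (T1 t w x) (T1 t w y).
Hypothesis T1scal : forall t w (k : R) x, 0 <= t -> inX P w x -> T1 t w (scal k x) = scal k (T1 t w x).
Hypothesis S1plus : forall t w x y, 0 <= t -> inY P (phi t w) x -> inY P (phi t w) y ->
      S1 t w (plus x y) = plus (S1 t w x) (S1 t w y).
Hypothesis S1scal : forall t w (k : R) y, 0 <= t -> inY P (phi t w) y ->
      S1 t w (scal k y) = scal k (S1 t w y).

Lemma inX_P w v : inX P w (P w v).
Proof. unfold inX. apply Pidem. Qed.

Lemma inX_minus w x y : inX P w x -> inX P w y -> inX P w (minus x y).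
Proof. unfold inX. intros hx hy. rewrite (linear_minus (P w)) by apply Plin. rewrite hx, hy; reflexivity. Qed.

Lemma inX_scal w (k : R) x : inX P w x -> inX P w (scal k x).
Proof. unfold inX. intros hx. rewrite (linear_scal (P w)) by apply Plin. rewrite hx; reflexivity. Qed.

Lemma inY_Pc w v : inY P w (Pc P w v).
Proof. unfold inY, Pc. rewrite (linear_minus (P w)) by apply Plin. rewrite Pidem. exact (minus_eq_zero _). Qed.

Lemma inY_minus w x y : inY P w x -> inY P w y -> inY P w (minus x y).
Proof. unfold inY. intros hx hy. rewrite (linear_minus (P w)) by apply Plin. rewrite hx, hy. exact (minus_eq_zero _). Qed.

Lemma inY_scal w (k : R) x : inY P w x -> inY P w (scal k x).
Proof. unfold inY. intros hx. rewrite (linear_scal (P w)) by apply Plin. rewrite hx. exact (scal_zero_r _). Qed.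

Lemma minus_scal {V : NormedModule R_AbsRing} (x y : V) : minus x y = plus x (scal (opp one) y).
Proof. unfold minus. f_equal. symmetry. exact (scal_opp_one y). Qed.

Lemma T1_minus t w x y : 0 <= t -> inX P w x -> inX P w y ->
  T1 t w (minus x y) = minus (T1 t w x) (T1 t w y).
Proof.
  intros ht hx hy. rewrite !minus_scal. rewrite T1plus; auto; [|apply inX_scal; auto].
  rewrite T1scal; auto.
Qed.

Lemma S1_minus t w x y : 0 <= t -> inY P (phi t w) x -> inY P (phi t w) y ->
  S1 t w (minus x y) = minus (S1 t w x) (S1 t w y).
Proof.
  intros ht hx hy. rewrite !minus_scal. rewrite S1plus; auto; [|apply inY_scal; auto].
  rewrite S1scal; auto.
Qed.

Lemma Pc_minus w u v : Pc P w (minus u v) = minus (Pc P w u) (Pc P w v).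
Proof. unfold Pc. rewrite (linear_minus (P w)) by apply Plin. exact (ag2 _ _ _ _). Qed.

Lemma P_minus w u v : P w (minus u v) = minus (P w u) (P w v).
Proof. apply linear_minus, Plin. Qed.

End Fib.


Section Core.
Context {Z : NormedModule R_AbsRing} {M : TopSpace} (phi : R -> M -> M) (P : M -> Z -> Z)
  (T1 S1 : R -> M -> Z -> Z) (f : M -> Z -> Z) (eps : M -> R) (C1 : R) (mu_s mu_u : M -> R).
Hypothesis Hsf0 : forall w, phi 0 w = w.
Hypothesis Hsf : forall t s w, 0 <= t -> 0 <= s -> phi (t + s) w = phi t (phi s w).
Hypothesis HLip : forall w t z z', 0 <= t ->
  norm (minus (f (phi t w) z) (f (phi t w) z')) <= eps w * norm (minus z z').
Hypothesis Heps0 : forall w, 0 <= eps w.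
Hypothesis Plin : forall w, is_linear (P w).
Hypothesis Pidem : forall w z, P w (P w z) = P w z.
Hypothesis T1plus : forall t w x y, 0 <= t -> inX P w x -> inX P w y ->
      T1 t w (plus x y) = plus (T1 t w x) (T1 t w y).
Hypothesis T1scal : forall t w (k : R) x, 0 <= t -> inX P w x -> T1 t w (scal k x) = scal k (T1 t w x).
Hypothesis S1plus : forall t w x y, 0 <= t -> inY P (phi t w) x -> inY P (phi t w) y ->
      S1 t w (plus x y) = plus (S1 t w x) (S1 t w y).
Hypothesis S1scal : forall t w (k : R) y, 0 <= t -> inY P (phi t w) y ->
      S1 t w (scal k y) = scal k (S1 t w y).
Hypothesis Pbound : forall w z, norm (P w z) <= C1 * norm z /\ norm (Pc P w z) <= C1 * norm z.
Hypothesis T1bd : forall t r w x, 0 <= t -> 0 <= r -> inX P (phi r w) x ->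
      norm (T1 t (phi r w) x) <= exp (mu_s w * t) * norm x.
Hypothesis S1bd : forall t r w y, 0 <= t -> 0 <= r -> inY P (phi t (phi r w)) y ->
      norm (S1 t (phi r w) y) <= exp (- mu_u w * t) * norm y.
Hypothesis HC1 : 0 <= C1.

Let T1m := T1_minus P T1 Plin T1plus T1scal.
Let S1m := S1_minus P S1 phi Plin S1plus S1scal.
Let Pm := P_minus P Plin.
Let Pcm := Pc_minus P Plin.
Let iXP := inX_P P Pidem.
Let iYPc := inY_Pc P Plin Pidem.
Let iXm := inX_minus P Plin.
Let iYm := inY_minus P Plin.

Definition Nf (t : R) (z z' : R -> Z) (u : R) :=
  norm (minus (z (Rmax 0 (Rmin t u))) (z' (Rmax 0 (Rmin t u)))).
Definition af (w' : M) (z z' : R -> Z) (r : R) :=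
  norm (minus (P (phi r w') (z r)) (P (phi r w') (z' r))).
Definition bf (w' : M) (z z' : R -> Z) (r : R) :=
  norm (minus (Pc P (phi r w') (z r)) (Pc P (phi r w') (z' r))).

Lemma Nf_cont t z z' c : 0 <= t -> zcont t z -> zcont t z' ->
  forall (g : R -> R), (forall x, continuity_pt g x) ->
  forall x, continuous (fun u => g u * (c * Nf t z z' u)) x.
Proof.
  intros ht hz hz' g hg x. apply continuity_pt_filterlim.
  apply continuity_pt_mult; [apply hg|].
  apply continuity_pt_mult; [apply continuity_pt_const; intros ? ?; reflexivity|].
  apply (Ncont t z z' ht hz hz').
Qed.

Lemma a_ineq (w : M) (s t : R) (z z' : R -> Z) : 0 <= s -> 0 <= t ->
  is_solution phi P T1 S1 f t (phi s w) z -> is_solution phi P T1 S1 f t (phi s w) z' ->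
  forall r, 0 <= r <= t ->
  exists I, is_RInt (fun u => exp (mu_s w * (r - u)) * (C1 * eps w * Nf t z z' u)) 0 r I
    /\ af (phi s w) z z' r <= exp (mu_s w * r) * af (phi s w) z z' 0 + I.
Proof.
  intros hs ht [hzc hzs] [hzc' hzs'] r hr.
  destruct (hzs r (proj1 hr) (proj2 hr)) as [[I [hI hIe]] _].
  destruct (hzs' r (proj1 hr) (proj2 hr)) as [[I' [hI' hIe']] _].
  set (g := fun u => exp (mu_s w * (r - u)) * (C1 * eps w * Nf t z z' u)).
  assert (hex : ex_RInt g 0 r).
  { apply (@ex_RInt_continuous R_CompleteNormedModule). intros x _. unfold g.
    apply (Nf_cont t z z' _ ht hzc hzc' (fun u => exp (mu_s w * (r - u)))).
    intros y. apply (continuity_pt_filterlim (fun u => exp (mu_s w * (r - u)))). apply (@ex_derive_continuous R_AbsRing R_NormedModule (fun u => exp (mu_s w * (r - u)))).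
    auto_derive. auto. }
  exists (RInt g 0 r). split; [apply (@RInt_correct R_CompleteNormedModule), hex|].
  unfold af. rewrite hIe, hIe'. rewrite (@ag3 (NormedModule.AbelianGroup R_AbsRing Z)).
  eapply Rle_trans; [apply norm_triangle|]. apply Rplus_le_compat.
  - rewrite <- T1m; auto; try apply iXP; auto; [|lra].
    rewrite Hsf0.
    apply (T1bd r s w); [lra|lra|]. apply iXm; auto; apply iXP; auto.
  - assert (hm := is_RInt_minus _ _ _ _ _ _ hI hI').
    refine (norm_RInt_le _ g 0 r _ _ (proj1 hr) _ hm _).
    2: { apply (@RInt_correct R_CompleteNormedModule), hex. }
    intros u hu. unfold g.
    replace (phi u (phi s w)) with (phi (u + s) w) by (apply Hsf; lra).
    rewrite <- T1m; auto; try apply iXP; auto; [|lra].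
    eapply Rle_trans; [apply (T1bd (r - u) (u + s) w); [lra|lra|]|].
    + apply iXm; auto; apply iXP; auto.
    + assert (0 < exp (mu_s w * (r - u))) by apply exp_pos.
      apply Rmult_le_compat_l; [lra|].
      rewrite <- Pm.
      eapply Rle_trans; [apply Pbound|].
      rewrite Rmult_assoc. apply Rmult_le_compat_l; [lra|].
      unfold Nf. rewrite clamp_id by lra. apply HLip. lra.
Qed.

Lemma b_ineq (w : M) (s t : R) (z z' : R -> Z) : 0 <= s -> 0 <= t ->
  is_solution phi P T1 S1 f t (phi s w) z -> is_solution phi P T1 S1 f t (phi s w) z' ->
  forall r, 0 <= r <= t ->
  exists J, is_RInt (fun u => exp (- mu_u w * (u - r)) * (C1 * eps w * Nf t z z' u)) r t J
    /\ bf (phi s w) z z' r <= exp (- mu_u w * (t - r)) * bf (phi s w) z z' t + J.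
Proof.
  intros hs ht [hzc hzs] [hzc' hzs'] r hr.
  destruct (hzs r (proj1 hr) (proj2 hr)) as [_ [J [hJ hJe]]].
  destruct (hzs' r (proj1 hr) (proj2 hr)) as [_ [J' [hJ' hJe']]].
  set (g := fun u => exp (- mu_u w * (u - r)) * (C1 * eps w * Nf t z z' u)).
  assert (hex : ex_RInt g r t).
  { apply (@ex_RInt_continuous R_CompleteNormedModule). intros x _. unfold g.
    apply (Nf_cont t z z' _ ht hzc hzc' (fun u => exp (- mu_u w * (u - r)))).
    intros y. apply (continuity_pt_filterlim (fun u => exp (- mu_u w * (u - r)))). apply (@ex_derive_continuous R_AbsRing R_NormedModule (fun u => exp (- mu_u w * (u - r)))).
    auto_derive. auto. }
  exists (RInt g r t). split; [apply (@RInt_correct R_CompleteNormedModule), hex|].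
  unfold bf. rewrite hJe, hJe'. rewrite (@ag2 (NormedModule.AbelianGroup R_AbsRing Z)).
  eapply Rle_trans; [apply norm_minus_le|]. apply Rplus_le_compat.
  - replace (phi r (phi s w)) with (phi (r + s) w) by (apply Hsf; lra).
    assert (E : phi (t - r) (phi (r + s) w) = phi t (phi s w)).
    { rewrite <- Hsf by lra. rewrite <- Hsf by lra. f_equal. ring. }
    rewrite <- S1m; auto; [| lra | rewrite E; apply iYPc; auto
                               | rewrite E; apply iYPc; auto].
    apply (S1bd (t - r) (r + s) w); [lra|lra|].
    rewrite E. apply iYm; auto; apply iYPc; auto.
  - assert (hm := is_RInt_minus _ _ _ _ _ _ hJ hJ').
    refine (norm_RInt_le _ g r t _ _ (proj2 hr) _ hm _).
    2: { apply (@RInt_correct R_CompleteNormedModule), hex. }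
    intros u hu. unfold g.
    replace (phi r (phi s w)) with (phi (r + s) w) by (apply Hsf; lra).
    replace (phi u (phi s w)) with (phi (u + s) w) by (apply Hsf; lra).
    assert (E : phi (u - r) (phi (r + s) w) = phi (u + s) w).
    { rewrite <- Hsf by lra. f_equal. ring. }
    rewrite <- S1m; auto; [| lra | rewrite E; apply iYPc; auto
                               | rewrite E; apply iYPc; auto].
    eapply Rle_trans; [apply (S1bd (u - r) (r + s) w); [lra|lra|]|].
    + rewrite E. apply iYm; auto; apply iYPc; auto.
    + assert (0 < exp (- mu_u w * (u - r))) by apply exp_pos.
      apply Rmult_le_compat_l; [lra|].
      rewrite <- Pcm.
      eapply Rle_trans; [apply Pbound|].
      rewrite Rmult_assoc. apply Rmult_le_compat_l; [lra|].
      unfold Nf. rewrite clamp_id by lra. apply HLip. lra.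
Qed.


Lemma core t s w x1 y1 x2 y2 x1' y1' x2' y2' : 0 <= t -> 0 <= s ->
  4 * (C1 * eps w) < mu_u w - mu_s w ->
  H_graph phi P T1 S1 f t (phi s w) x1 y1 x2 y2 ->
  H_graph phi P T1 S1 f t (phi s w) x1' y1' x2' y2' ->
  exists A B : R -> R,
    (forall x, is_derive A x ((mu_s w + C1 * eps w) * A x + C1 * eps w * B x)) /\
    (forall x, is_derive B x ((mu_u w - C1 * eps w) * B x - C1 * eps w * A x)) /\
    A 0 = norm (minus x1 x1') /\ B t = norm (minus y2 y2') /\
    norm (minus y1 y1') <= B 0 /\ norm (minus x2 x2') <= A t /\
    (forall r, 0 <= r <= t -> 0 <= A r /\ 0 <= B r).
Proof.
  intros ht hs hg (hx1 & hy2 & z & hz & e0 & et & e1 & e2)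
    (hx1' & hy2' & z' & hz' & e0' & et' & e1' & e2').
  set (d := C1 * eps w). set (m := mu_s w). set (n := mu_u w).
  assert (hd : 0 <= d) by (unfold d; apply Rmult_le_pos; auto).
  set (a := af (phi s w) z z'). set (b := bf (phi s w) z z'). set (N := Nf t z z').
  destruct (bvp m n d t (a 0) (b t) hd hg ht) as (A & B & hA & hB & hA0 & hBt).
  assert (hzc : zcont t z) by exact (proj1 hz). assert (hzc' : zcont t z') by exact (proj1 hz').
  assert (hNc := Ncont t z z' ht hzc hzc').
  assert (hAc : forall x, continuity_pt A x).
  { intros x. apply continuity_pt_filterlim, (@ex_derive_continuous R_AbsRing R_NormedModule).
    eexists; apply hA. }
  assert (hBc : forall x, continuity_pt B x).
  { intros x. apply continuity_pt_filterlim, (@ex_derive_continuous R_AbsRing R_NormedModule).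
    eexists; apply hB. }
  assert (cmp : forall r, 0 <= r <= t -> a r <= A r /\ b r <= B r).
  { apply (compare m n d t a b N A B hd hg ht).
    - intros r hr. unfold N, Nf, a, b, af, bf. rewrite clamp_id by exact hr.
      unfold Pc. rewrite <- (ag1 (P (phi r (phi s w)) (z r)) (P (phi r (phi s w)) (z' r))).
      apply norm_triangle.
    - intros r hr. apply (a_ineq w s t z z' hs ht hz hz' r hr).
    - intros r hr. apply (b_ineq w s t z z' hs ht hz hz' r hr).
    - intros r. rewrite <- hA0. apply (ode_intA m n d A B hA hB r).
    - intros r. rewrite <- hBt. apply (ode_intB m n d t A B hA hB r).
    - destruct (continuity_ab_maj (fun u => Nf t z z' u) 0 t ht (fun c _ => hNc c)) as [xN [hxN _]].
      destruct (continuity_ab_min A 0 t ht (fun c _ => hAc c)) as [xA [hxA _]].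
      destruct (continuity_ab_min B 0 t ht (fun c _ => hBc c)) as [xB [hxB _]].
      exists (Rmax (C1 * Nf t z z' xN) (Rmax (- A xA) (- B xB))).
      intros r hr.
      assert (h1 : C1 * Nf t z z' xN <= Rmax (C1 * Nf t z z' xN) (Rmax (- A xA) (- B xB))) by apply Rmax_l.
      assert (h2 : Rmax (- A xA) (- B xB) <= Rmax (C1 * Nf t z z' xN) (Rmax (- A xA) (- B xB))) by apply Rmax_r.
      assert (h3 : - A xA <= Rmax (- A xA) (- B xB)) by apply Rmax_l.
      assert (h4 : - B xB <= Rmax (- A xA) (- B xB)) by apply Rmax_r.
      assert (hNr := hxN r hr). assert (hAr := hxA r hr). assert (hBr := hxB r hr).
      assert (hN' : Nf t z z' r = norm (minus (z r) (z' r))) by (unfold Nf; rewrite clamp_id by exact hr; reflexivity).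
      assert (ha : a r <= C1 * Nf t z z' r).
      { unfold a, af. rewrite <- Pm, hN'. apply Pbound. }
      assert (hb : b r <= C1 * Nf t z z' r).
      { unfold b, bf. rewrite <- Pcm, hN'. apply Pbound. }
      assert (C1 * Nf t z z' r <= C1 * Nf t z z' xN) by (apply Rmult_le_compat_l; auto).
      repeat split; lra. }
  exists A, B. split; [exact hA|]. split; [exact hB|].
  split; [|split; [|split; [|split; [|intros r hr; destruct (cmp r hr);
     assert (0 <= a r) by apply norm_ge_0; assert (0 <= b r) by apply norm_ge_0; split; lra]]]].
  - rewrite hA0. unfold a, af. rewrite Hsf0, e0, e0'. reflexivity.
  - rewrite hBt. unfold b, bf. rewrite et, et'. reflexivity.
  - assert (h := proj2 (cmp 0 ltac:(lra))). unfold b, bf in h. rewrite Hsf0 in h.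
    rewrite e1, e1'. exact h.
  - assert (h := proj1 (cmp t ltac:(lra))). unfold a, af in h.
    rewrite e2, e2'. exact h.
Qed.

End Core.


Section Main.
Context (X Y : CompleteNormedModule R_AbsRing)
  (M : TopSpace) (phi : R -> M -> M)
  (f : M -> Zsp X Y -> Zsp X Y) (eps : M -> R)
  (P : M -> Zsp X Y -> Zsp X Y) (T1 S1 : R -> M -> Zsp X Y -> Zsp X Y)
  (C1 : R) (mu_s mu_u : M -> R).
Hypothesis hphi : semiflow M phi.
Hypothesis hLipw : forall w, is_sup_Lip phi f w (eps w).
Hypothesis hUD : uniform_dichotomy phi P T1 S1 C1 mu_s mu_u.
Hypothesis hgap : forall w, mu_u w - mu_s w - 2 * (2 * C1 * eps w) > 0.

Lemma triv_space (w : M) : C1 < 0 -> forall z : Zsp X Y, norm z = 0.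
Proof.
  intros hC z. destruct hUD as (_ & _ & _ & _ & _ & _ & _ & _ & _ & _ & _ & _ & _ & _ & _ & Pb & _).
  destruct (Pb w z) as [h _]. assert (0 <= norm (P w z)) by apply norm_ge_0.
  assert (0 <= norm z) by apply norm_ge_0. nra.
Qed.

Lemma eps_ge0 w : 0 <= eps w.
Proof. apply (hLipw w). Qed.

Lemma epsp_ge0 w : 0 <= 2 * C1 * eps w.
Proof.
  destruct (Rle_lt_dec 0 C1) as [h|h].
  - assert (h2 := eps_ge0 w). nra.
  - assert (eps w <= 0).
    { destruct (hLipw w) as (_ & _ & hmin). apply hmin; [lra|].
      intros t z z' _. rewrite (triv_space w h (minus _ _)). lra. }
    assert (h2 := eps_ge0 w). assert (eps w = 0) by lra. rewrite H0. lra.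
Qed.

Lemma Rpower_exp a t : Rpower (exp a) t = exp (t * a).
Proof. unfold Rpower. rewrite ln_exp. reflexivity. Qed.

Lemma master t s w al be ka kb : 0 <= t -> 0 <= s ->
  let ep := 2 * C1 * eps w in let sg := mu_u w - mu_s w - ep in
  ep / sg <= al <= 1 -> ep / sg <= be <= 1 ->
  ep / sg + (al - ep / sg) * exp (- sg * t) <= ka * al ->
  ep / sg + (be - ep / sg) * exp (- sg * t) <= kb * be ->
  AB_cond (H_graph phi P T1 S1 f t (phi s w)) al (ka * al)
     (Rpower (exp (- mu_u w + ep)) t) be (kb * be) (Rpower (exp (mu_s w + ep)) t).
Proof.
  intros ht hs ep sg hal hbe hka hkb.
  rewrite !Rpower_exp.
  intros x1 y1 x2 y2 x1' y1' x2' y2' H1 H2.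
  destruct (Rle_lt_dec 0 C1) as [hC|hC].
  2: { rewrite !(triv_space w hC). repeat split; intros; lra. }
  destruct hphi as (Hsf0 & Hsf & _).
  destruct hUD as (Plin & Pidem & Pcont & T1X & T1plus & T1scal & T10 & T1coc & T1cont & S1Y
     & S1plus & S1scal & S10 & S1coc & S1cont & Pbound & T1bd & S1bd).
  assert (HLip : forall w t z z', 0 <= t ->
    norm (minus (f (phi t w) z) (f (phi t w) z')) <= eps w * norm (minus z z')).
  { intros w0 t0 z z' h. apply (proj1 (proj2 (hLipw w0))). exact h. }
  assert (hg := hgap w).
  assert (hg' : 4 * (C1 * eps w) < mu_u w - mu_s w) by lra.
  destruct (core phi P T1 S1 f eps C1 mu_s mu_u Hsf0 Hsf HLip eps_ge0 Plin Pidem T1plus T1scal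
     S1plus S1scal Pbound T1bd S1bd hC t s w x1 y1 x2 y2 x1' y1' x2' y2' ht hs hg' H1 H2)
    as (A & B & hA & hB & hA0 & hBt & hy1 & hx2 & hpos).
  set (d := C1 * eps w) in *.
  assert (hd : 0 <= d) by (unfold d; assert (h := eps_ge0 w); nra).
  assert (hsig : 0 < mu_u w - mu_s w - 2 * d) by (unfold d; lra).
  assert (hsg : mu_u w - mu_s w - 2 * d = sg) by (unfold sg, ep, d; ring).
  assert (hc : 2 * d / (mu_u w - mu_s w - 2 * d) = ep / sg).
  { rewrite hsg. unfold Rdiv. f_equal. unfold ep, d. ring. }
  assert (hA0' : forall r, 0 <= r <= t -> 0 <= A r) by (intros r hr; apply hpos; auto).
  assert (hB0' : forall r, 0 <= r <= t -> 0 <= B r) by (intros r hr; apply hpos; auto).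
  assert (hc0 : 0 <= ep / sg).
  { rewrite <- hc. apply Rmult_le_pos; [lra|]. left; apply Rinv_0_lt_compat; lra. }
  assert (hBt0 : 0 <= B t) by (apply hB0'; lra).
  assert (hA00 : 0 <= A 0) by (apply hA0'; lra).
  split; [|split; [|split]].
  - intros h.
    assert (hA0B : A 0 <= al * B 0) by (rewrite hA0; nra).
    destruct (coneF (mu_s w) (mu_u w) d t A B hd hsig ht hA hB hB0' al
      ltac:(rewrite hc; lra) hA0B) as [h1 _].
    rewrite hc, hsg in h1. rewrite <- hBt. nra.
  - intros h.
    assert (hA0B : A 0 <= al * B 0) by (rewrite hA0; nra).
    destruct (coneF (mu_s w) (mu_u w) d t A B hd hsig ht hA hB hB0' al
      ltac:(rewrite hc; lra) hA0B) as [_ h2].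
    rewrite <- hBt. replace (t * (- mu_u w + ep)) with (- (mu_u w - 2 * d) * t)
      by (unfold ep, d; ring). lra.
  - intros h.
    assert (hBA : B t <= be * A t) by (rewrite hBt; nra).
    destruct (coneB (mu_s w) (mu_u w) d t A B hd hsig ht hA hB hA0' be
      ltac:(rewrite hc; lra) hBA) as [h1 _].
    rewrite hc, hsg in h1. rewrite <- hA0. nra.
  - intros h.
    assert (hBA : B t <= be * A t) by (rewrite hBt; nra).
    destruct (coneB (mu_s w) (mu_u w) d t A B hd hsig ht hA hB hA0' be
      ltac:(rewrite hc; lra) hBA) as [_ h2].
    rewrite <- hA0. replace (t * (mu_s w + ep)) with ((mu_s w + 2 * d) * t)
      by (unfold ep, d; ring). lra.
Qed.

End Main.


Lemma kbound (ep sg al eps1 t k : R) : 0 < sg -> 0 <= ep -> ep / sg < al -> 0 < eps1 <= t ->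
  ((sg - ep / al) * exp (- sg * eps1) + ep / al) / sg <= k ->
  ep / sg + (al - ep / sg) * exp (- sg * t) <= k * al.
Proof.
  intros hsg hep hal ht hk.
  assert (hc0 : 0 <= ep / sg) by (apply Rmult_le_pos; [lra|left; apply Rinv_0_lt_compat; lra]).
  assert (hal0 : 0 < al) by lra.
  assert (he : exp (- sg * t) <= exp (- sg * eps1)) by (apply exp_le; nra).
  assert (ep / sg + (al - ep / sg) * exp (- sg * t) <= ep / sg + (al - ep / sg) * exp (- sg * eps1)).
  { apply Rplus_le_compat_l. apply Rmult_le_compat_l; lra. }
  assert (ep / sg + (al - ep / sg) * exp (- sg * eps1) =
          al * (((sg - ep / al) * exp (- sg * eps1) + ep / al) / sg)) by (field; lra).
  assert (al * (((sg - ep / al) * exp (- sg * eps1) + ep / al) / sg) <= al * k)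
    by (apply Rmult_le_compat_l; lra).
  lra.
Qed.

Lemma kconst (c a e r C : R) : 0 <= c -> c <= C -> C < a -> 0 <= e <= r -> r <= 1 ->
  c + (a - c) * e <= (1 - (a - C) * (1 - r) / a) * a.
Proof.
  intros h1 h2 h3 h4 h5.
  replace ((1 - (a - C) * (1 - r) / a) * a) with (a - (a - C) * (1 - r)) by (field; lra).
  assert ((a - C) * (1 - r) <= (a - c) * (1 - e)).
  { apply Rmult_le_compat; lra. }
  lra.
Qed.

Lemma kconst_lt (a r C : R) : 0 <= C -> C < a -> r < 1 -> 1 - (a - C) * (1 - r) / a < 1.
Proof.
  intros h1 h2 h3. assert (0 < (a - C) * (1 - r) / a).
  { apply Rdiv_lt_0_compat; [apply Rmult_lt_0_compat|]; lra. }
  lra.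
Qed.

Theorem theorem3p12
  (X Y : CompleteNormedModule R_AbsRing)
  (T : R -> X -> X) (S : R -> Y -> Y)
  (M : TopSpace) (phi : R -> M -> M)
  (L : M -> Zsp X Y -> Zsp X Y) (f : M -> Zsp X Y -> Zsp X Y) (eps : M -> R)
  (P : M -> Zsp X Y -> Zsp X Y) (T1 S1 : R -> M -> Zsp X Y -> Zsp X Y)
  (C1 : R) (mu_s mu_u : M -> R)
  (hT : C0_semigroup T)
  (hS : C0_semigroup (fun t => S (- t)))
  (hM : Hausdorff M) (hphi : semiflow M phi)
  (hD1 : D1 phi L) (hD2 : D2 phi f eps)
  (hUD : uniform_dichotomy phi P T1 S1 C1 mu_s mu_u)
  (hUDc : UD_compat phi T S L P T1 S1)
  (hgap : forall w, mu_u w - mu_s w - 2 * (2 * C1 * eps w) > 0) :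
  let eps' := fun w => 2 * C1 * eps w in
  let sigma := fun w => mu_u w - mu_s w - eps' w in
  let lam_u := fun w => exp (- mu_u w + eps' w) in
  let lam_s := fun w => exp (mu_s w + eps' w) in
  let H := H_graph phi P T1 S1 f in
  (* main assertion *)
  (forall alpha beta : M -> R,
     (forall w, eps' w / sigma w <= alpha w /\ alpha w < 1 /\
                eps' w / sigma w <= beta w /\ beta w < 1) ->
     forall t s w, 0 <= t -> 0 <= s ->
       AB_cond (H t (phi s w)) (alpha w) (alpha w) (Rpower (lam_u w) t)
                               (beta w) (beta w) (Rpower (lam_s w) t)) /\
  (* "moreover" *)
  (forall alpha beta : M -> R,
     (forall w, eps' w / sigma w < alpha w /\ alpha w < 1 /\
                eps' w / sigma w < beta w /\ beta w < 1) ->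
     forall eps1, 0 < eps1 ->
     forall k_alpha k_beta : M -> R,
     (forall w,
        ((sigma w - eps' w / alpha w) * exp (- sigma w * eps1) + eps' w / alpha w)
          / sigma w <= k_alpha w /\ k_alpha w < 1 /\
        ((sigma w - eps' w / beta w) * exp (- sigma w * eps1) + eps' w / beta w)
          / sigma w <= k_beta w /\ k_beta w < 1) ->
     forall t s w, eps1 <= t -> 0 <= s ->
       AB_cond (H t (phi s w)) (alpha w) (k_alpha w * alpha w) (Rpower (lam_u w) t)
                               (beta w) (k_beta w * beta w) (Rpower (lam_s w) t)) /\
  (* "in particular" *)
  (forall c delta, 1 < c -> 0 < delta ->
     (forall w, delta <= mu_u w - mu_s w - (1 + c) * eps' w) ->
     (exists q, q < 1 /\ forall w, lam_s w * lam_u w <= q) /\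
     (forall eps1, 0 < eps1 ->
        exists a0 b0 ka kb, a0 < 1 /\ b0 < 1 /\ ka < 1 /\ kb < 1 /\
          (forall w, eps' w / sigma w < a0 /\ eps' w / sigma w < b0) /\
          (forall t s w, 0 <= t -> 0 <= s ->
             AB_cond (H t (phi s w)) a0 a0 (Rpower (lam_u w) t)
                                     b0 b0 (Rpower (lam_s w) t)) /\
          (forall t s w, eps1 <= t -> 0 <= s ->
             AB_cond (H t (phi s w)) a0 (ka * a0) (Rpower (lam_u w) t)
                                     b0 (kb * b0) (Rpower (lam_s w) t))) /\
     (forall E, (forall w, eps' w <= E) ->
        forall a, E / delta < a -> a < 1 ->
        forall eps1, 0 < eps1 ->
        exists ka kb, ka < 1 /\ kb < 1 /\
          (forall t s w, 0 <= t -> 0 <= s ->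
             AB_cond (H t (phi s w)) a a (Rpower (lam_u w) t)
                                     a a (Rpower (lam_s w) t)) /\
          (forall t s w, eps1 <= t -> 0 <= s ->
             AB_cond (H t (phi s w)) a (ka * a) (Rpower (lam_u w) t)
                                     a (kb * a) (Rpower (lam_s w) t)))).
Proof.
  intros eps' sigma lam_u lam_s H.
  assert (hLipw : forall w, is_sup_Lip phi f w (eps w)) by apply hD2.
  pose proof (master X Y M phi f eps P T1 S1 C1 mu_s mu_u hphi hLipw hUD hgap) as MS0.
  assert (MS : forall t s w al be ka kb, 0 <= t -> 0 <= s ->
    eps' w / sigma w <= al <= 1 -> eps' w / sigma w <= be <= 1 ->
    eps' w / sigma w + (al - eps' w / sigma w) * exp (- sigma w * t) <= ka * al ->
    eps' w / sigma w + (be - eps' w / sigma w) * exp (- sigma w * t) <= kb * be ->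
    AB_cond (H t (phi s w)) al (ka * al) (Rpower (lam_u w) t) be (kb * be) (Rpower (lam_s w) t)).
  { intros t s w al be ka kb h1 h2 h3 h4 h5 h6. exact (MS0 t s w al be ka kb h1 h2 h3 h4 h5 h6). }
  clear MS0.
  assert (hep : forall w, 0 <= eps' w) by (intros w; apply (epsp_ge0 X Y M phi f eps P T1 S1 C1 mu_s mu_u hLipw hUD)).
  assert (hsg : forall w, 0 < sigma w) by (intros w; specialize (hgap w); specialize (hep w); unfold sigma, eps' in *; lra).
  assert (hc0 : forall w, 0 <= eps' w / sigma w)
    by (intros w; apply Rmult_le_pos; [apply hep|left; apply Rinv_0_lt_compat; apply hsg]).
  assert (hk1 : forall w al t, 0 <= t -> eps' w / sigma w <= al ->
            eps' w / sigma w + (al - eps' w / sigma w) * exp (- sigma w * t) <= 1 * al).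
  { intros w al t ht hal.
    assert (0 < exp (- sigma w * t)) by apply exp_pos.
    assert (exp (- sigma w * t) <= 1) by (rewrite <- exp_0; apply exp_le; specialize (hsg w); nra).
    assert ((al - eps' w / sigma w) * exp (- sigma w * t) <= al - eps' w / sigma w).
    { assert (0 <= al - eps' w / sigma w) by lra. nra. }
    lra. }
  split; [|split].
  - intros alpha beta hab t s w ht hs. destruct (hab w) as (h1 & h2 & h3 & h4).
    pose proof (MS t s w (alpha w) (beta w) 1 1 ht hs ltac:(split; lra) ltac:(split; lra)
      (hk1 w (alpha w) t ht h1) (hk1 w (beta w) t ht h3)) as R.
    rewrite !Rmult_1_l in R. exact R.
  - intros alpha beta hab eps1 he1 ka kb hk t s w ht hs.
    destruct (hab w) as (h1 & h2 & h3 & h4). destruct (hk w) as (k1 & k2 & k3 & k4).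
    apply (MS t s w (alpha w) (beta w) (ka w) (kb w) ltac:(lra) hs ltac:(split; lra) ltac:(split; lra)).
    + apply (kbound (eps' w) (sigma w) (alpha w) eps1 t (ka w)); auto; lra.
    + apply (kbound (eps' w) (sigma w) (beta w) eps1 t (kb w)); auto; lra.
  - intros c0 Dl hc hDl hd.
    assert (hsD : forall w, Dl + c0 * eps' w <= sigma w)
      by (intros w; specialize (hd w); specialize (hep w); unfold sigma; nra).
    assert (hsD' : forall w, Dl <= sigma w)
      by (intros w; specialize (hsD w); specialize (hep w); nra).
    set (r := fun eps1 => exp (- Dl * eps1)).
    assert (hr : forall eps1, 0 < eps1 -> r eps1 < 1)
      by (intros e he; unfold r; rewrite <- exp_0; apply exp_increasing; nra).
    assert (hr0 : forall eps1, 0 < r eps1) by (intros; apply exp_pos).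
    assert (her : forall w eps1 t, 0 < eps1 <= t -> 0 <= exp (- sigma w * t) <= r eps1).
    { intros w e t ht. split; [left; apply exp_pos|]. unfold r. apply exp_le.
      specialize (hsD' w). nra. }
    split; [|split].
    + exists (exp (- Dl)). split.
      * rewrite <- exp_0. apply exp_increasing. lra.
      * intros w. unfold lam_s, lam_u. rewrite <- exp_plus. apply exp_le.
        specialize (hd w). specialize (hep w). unfold eps' in *. nra.
    + intros eps1 he1.
      set (a0 := (1 + / c0) / 2).
      assert (hic : 0 < / c0 < 1).
      { split; [apply Rinv_0_lt_compat; lra|]. rewrite <- Rinv_1. apply Rinv_lt_contravar; lra. }
      assert (ha0 : / c0 < a0 < 1) by (unfold a0; lra).
      assert (hcw : forall w, eps' w / sigma w <= / c0).
      { intros w. specialize (hsD w). specialize (hsg w). specialize (hep w).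
        unfold Rdiv. apply (Rmult_le_reg_r (sigma w * c0)); [nra|].
        replace (eps' w * / sigma w * (sigma w * c0)) with (eps' w * c0) by (field; lra).
        replace (/ c0 * (sigma w * c0)) with (sigma w) by (field; lra). nra. }
      set (ka := 1 - (a0 - / c0) * (1 - r eps1) / a0).
      exists a0, a0, ka, ka.
      assert (hka : ka < 1) by (apply kconst_lt; [lra|lra|apply hr; lra]).
      split; [lra|]. split; [lra|]. split; [exact hka|]. split; [exact hka|].
      split; [intros w; specialize (hcw w); lra|]. split.
      * intros t s w ht hs. specialize (hcw w).
        pose proof (MS t s w a0 a0 1 1 ht hs ltac:(split; lra) ltac:(split; lra)
          (hk1 w a0 t ht ltac:(lra)) (hk1 w a0 t ht ltac:(lra))) as R.
        rewrite !Rmult_1_l in R. exact R.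
      * intros t s w ht hs. specialize (hcw w).
        assert (hkk : eps' w / sigma w + (a0 - eps' w / sigma w) * exp (- sigma w * t) <= ka * a0).
        { apply kconst; [apply hc0| lra | lra | apply her; lra | left; apply hr; lra]. }
        apply (MS t s w a0 a0 ka ka ltac:(lra) hs ltac:(split; lra) ltac:(split; lra) hkk hkk).
    + intros E hE a ha ha1 eps1 he1.
      assert (hcw : forall w, eps' w / sigma w <= E / Dl).
      { intros w. specialize (hsD' w). specialize (hsg w). specialize (hep w). specialize (hE w).
        unfold Rdiv. apply (Rmult_le_reg_r (sigma w * Dl)); [nra|].
        replace (eps' w * / sigma w * (sigma w * Dl)) with (eps' w * Dl) by (field; lra).
        replace (E * / Dl * (sigma w * Dl)) with (E * sigma w) by (field; lra). nra. }
      destruct (Rlt_le_dec 0 a) as [hapos|haneg].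
      2: { exists 0, 0. split; [lra|]. split; [lra|].
           split; intros t s w; specialize (hcw w); specialize (hc0 w); lra. }
      set (C := Rmax (E / Dl) 0).
      assert (hC1 : E / Dl <= C) by apply Rmax_l. assert (hC0 : 0 <= C) by apply Rmax_r.
      assert (hCa : C < a) by (unfold C, Rmax; destruct Rle_dec; lra).
      set (ka := 1 - (a - C) * (1 - r eps1) / a).
      exists ka, ka.
      assert (hka : ka < 1) by (apply kconst_lt; [lra|lra|apply hr; lra]).
      split; [exact hka|]. split; [exact hka|]. split.
      * intros t s w ht hs. specialize (hcw w).
        pose proof (MS t s w a a 1 1 ht hs ltac:(split; lra) ltac:(split; lra)
          (hk1 w a t ht ltac:(lra)) (hk1 w a t ht ltac:(lra))) as R.
        rewrite !Rmult_1_l in R. exact R.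
      * intros t s w ht hs. specialize (hcw w).
        assert (hkk : eps' w / sigma w + (a - eps' w / sigma w) * exp (- sigma w * t) <= ka * a).
        { apply kconst; [apply hc0| lra | lra | apply her; lra | left; apply hr; lra]. }
        apply (MS t s w a a ka ka ltac:(lra) hs ltac:(split; lra) ltac:(split; lra) hkk hkk).
Qed.
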